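(* Let $n,t\ge1$ and $q,b\ge2$. Let $\boldsymbol{x}\in\Sigma_q^n$ and $\mathcal{U}\subseteq\mathcal{I}_{t,b}(\boldsymbol{x})$. For every $\alpha\in\Sigma_q\setminus\{x_1\}$ we have $|\mathcal{U}^{\alpha\succ x_1,b}|\le\frac12 N_{q,b}^+(n,t)$. Consequently, if $|\mathcal{U}|\ge N_{q,b}^+(n,t)+1$, then $|\mathcal{U}^{\alpha\succ x_1,b}|<|\mathcal{U}^{x_1\succ\alpha,b}|$ for every $\alpha\in\Sigma_q\setminus\{x_1\}$.
   Context: $\Sigma_q=\{0,\ldots,q-1\}$. A $b$-burst-insertion at position $i\in[1,n+1]$ transforms $x_1\cdots x_n$ into $x_1\cdots x_{i-1}y_1\cdots y_b x_i\cdots x_n$ for arbitrary $y_1\cdots y_b\in\Sigma_q^b$. $\mathcal{I}_{t,b}(\boldsymbol{x})$ is the set of all length-$(n+tb)$ sequences obtainable from $\boldsymbol{x}$ by $t$ successive $b$-burst-insertions. $N_{q,b}^+(n,t)=\max\{|\mathcal{I}_{t,b}(\boldsymbol{x})\cap\mathcal{I}_{t,b}(\boldsymbol{y})|:\boldsymbol{x}\ne\boldsymbol{y}\in\Sigma_q^n\}$. For $\mathcal{U}\subseteq\Sigma_q^{n+tb}$ and distinct $\alpha,\beta\in\Sigma_q$, $\mathcal{U}^{\alpha\succ\beta,b}$ is the set of $\boldsymbol{y}\in\mathcal{U}$ for which there is $i\in[1,t+1]$ with $y_{(i-1)b+1}=\alpha$ and $y_{(j-1)b+1}\notin\{\alpha,\beta\}$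 for all $j\in[1,i-1]$ (i.e., among positions $1,b+1,\ldots,tb+1$, the symbol $\alpha$ appears before $\beta$). *)

(* Defs.v *)
From mathcomp Require Import all_boot.
Set Implicit Arguments. Unset Strict Implicit. Unset Printing Implicit Defensive.

(* s' is obtained from s by one b-burst-insertion: insert y (|y| = b) before
   position i+1 (0-indexed: after the first i symbols), i in [0, size s]. *)
Definition burst_ins (q b : nat) (s s' : seq 'I_q) : bool :=
  [exists i : 'I_(size s).+1, exists y : b.-tuple 'I_q,
     s' == take i s ++ (y : seq 'I_q) ++ drop i s].

Fixpoint burst_reach (q b t : nat) (s s' : seq 'I_q) : bool :=
  match t with
  | 0 => s' == s
  | t'.+1 => [exists z : (size s + b).-tuple 'I_q,
                burst_ins b s z && burst_reach b t' z s']
  end.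

Definition Ins (q n t b : nat) (x : n.-tuple 'I_q) : {set (n + t * b).-tuple 'I_q} :=
  [set z : (n + t * b).-tuple 'I_q | burst_reach b t x z].

Definition Nplus (q b n t : nat) : nat :=
  \max_(x : n.-tuple 'I_q) \max_(y : n.-tuple 'I_q | y != x)
     #|Ins t b x :&: Ins t b y|.

(* U^{alpha > beta, b}: among positions 1, b+1, ..., tb+1 (1-indexed),
   i.e. 0-indexed positions i*b for i = 0..t, alpha appears before beta. *)
Definition prec_set (q n t b : nat) (U : {set (n + t * b).-tuple 'I_q})
    (alpha beta : 'I_q) : {set (n + t * b).-tuple 'I_q} :=
  [set y in U | [exists i : 'I_t.+1,
      (nth q (map val y) (i * b) == val alpha) &&
      [forall j : 'I_t.+1, (j < i) ==>
          (nth q (map val y) (j * b) != val alpha) &&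
          (nth q (map val y) (j * b) != val beta)]]].

(* Main.v *)
Require Import Defs.
From mathcomp Require Import all_boot zify.
Set Implicit Arguments. Unset Strict Implicit. Unset Printing Implicit Defensive.

Section Reach.
Variables (q b : nat).
Implicit Types (s u v T S P : seq 'I_q).
Local Notation R := (@burst_reach q b).

Lemma insP s v : burst_ins b s v <->
  exists i y, i <= size s /\ size y = b /\ v = take i s ++ y ++ drop i s.
Proof.
split.
  move=> /existsP[i /existsP[y /eqP ->]].
  by exists i, (val y); rewrite size_tuple -ltnS ltn_ord.
case=> i [y [hi [hy ->]]].
apply/existsP; exists (Ordinal (hi : i < (size s).+1)).
apply/existsP; exists (Tuple (introT eqP hy)); by [].
Qed.

Lemma ins_size s v : burst_ins b s v -> size v = size s + b.
Proof.
move=> /insP[i [y [hi [hy ->]]]].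
rewrite !size_cat hy size_take size_drop.
case: ltnP => h; lia.
Qed.

Lemma reachS t s u : R t.+1 s u <-> exists v, burst_ins b s v /\ R t v u.
Proof.
split.
  by move=> /existsP[z /andP[h1 h2]]; exists z.
case=> v [h1 h2].
have sz : size v == size s + b by rewrite (ins_size h1).
by apply/existsP; exists (Tuple sz); apply/andP.
Qed.

Lemma reach0 s u : R 0 s u <-> u = s.
Proof. by rewrite /=; split => [/eqP|->]. Qed.

Lemma reach_size t s u : R t s u -> size u = size s + t * b.
Proof.
elim: t s => [|t IH] s; first by move=> /reach0 ->; rewrite addn0.
move=> /reachS[v [h1 h2]]; rewrite (IH _ h2) (ins_size h1); lia.
Qed.

Lemma reach_comp t1 t2 s u :
  R (t1 + t2) s u <-> exists v, R t1 s v /\ R t2 v u.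
Proof.
elim: t1 s => [|t1 IH] s.
  split; first by move=> h; exists s; split => //; apply/reach0.
  by case=> v [/reach0 -> h].
rewrite addSn; split.
  move=> /reachS[v [h1 /IH[w [h2 h3]]]].
  by exists w; split => //; apply/reachS; exists v.
case=> w [/reachS[v [h1 h2]] h3].
apply/reachS; exists v; split => //; apply/IH; by exists w.
Qed.

Lemma reach1 s u : R 1 s u <-> burst_ins b s u.
Proof.
split; first by move=> /reachS[v [h /reach0 ->]].
by move=> h; apply/reachS; exists u; split => //; apply/reach0.
Qed.

Lemma reach_snoc t s u : R t.+1 s u <-> exists v, R t s v /\ burst_ins b v u.
Proof.
rewrite -addn1; split.
  by move=> /reach_comp[v [h1 /reach1 h2]]; exists v.
by case=> v [h1 h2]; apply/reach_comp; exists v; split => //; apply/reach1.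
Qed.

Lemma reach_cons m c T S : R m T S -> R m (c :: T) (c :: S).
Proof.
elim: m T => [|m IH] T; first by move=> /reach0 ->; apply/reach0.
move=> /reachS[v [/insP[i [y [hi [hy ->]]]] h2]].
apply/reachS; exists (c :: (take i T ++ y ++ drop i T)); split; last exact: IH.
by apply/insP; exists i.+1, y.
Qed.

Lemma reach_pre_aux j P S : size P = j * b -> R j S (P ++ S).
Proof.
elim: j P S => [|j IH] P S hP.
  by case: P hP => // _; apply/reach0.
apply/reachS; exists (drop (j * b) P ++ S); split.
  apply/insP; exists 0, (drop (j * b) P); rewrite take0 drop0; split => //.
  by rewrite size_drop hP mulSn; split => //; lia.
have -> : P ++ S = take (j * b) P ++ (drop (j * b) P ++ S) by rewrite catA cat_take_drop.
apply: IH; rewrite size_take hP mulSn; case: ltnP => h; lia.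
Qed.

Lemma reach_pre j m P T S : R m T S -> size P = j * b -> R (j + m) T (P ++ S).
Proof.
move=> h hP; rewrite addnC; apply/reach_comp; exists S; split => //; exact: reach_pre_aux.
Qed.

Lemma C_fwd t c T u : R t (c :: T) u ->
  exists k P S, k <= t /\ size P = k * b /\ R (t - k) T S /\ u = P ++ c :: S.
Proof.
elim: t u => [|t IH] u.
  by move=> /reach0 ->; exists 0, [::], T; split => //; split => //; split => //; apply/reach0.
move=> /reach_snoc[v [/IH[k [P [S [hk [hP [hS ->]]]]]] /insP[i [y [hi [hy ->]]]]]].
case: (leqP i (size P)) => hiP.
  exists k.+1, (take i P ++ y ++ drop i P), S; split; first lia.
  split; first by rewrite !size_cat size_take size_drop hy hP mulSn; case: ltnP => h; lia.
  rewrite subSS; split => //.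
  by rewrite take_cat drop_cat !ltn_neqAle hiP andbT; case: eqP => [->|_];
    rewrite ?subnn ?take0 ?drop0 ?take_size ?drop_size ?cats0 //= ?catA.
exists k, P, (take (i - size P).-1 S ++ y ++ drop (i - size P).-1 S); split; first lia.
split => //; split.
  rewrite subSn //; apply/reach_snoc; exists S; split => //.
  apply/insP; exists (i - size P).-1, y; split => //.
  move: hi; rewrite size_cat /=; lia.
rewrite take_cat drop_cat ltnNge (ltnW hiP) /=.
have -> : i - size P = (i - size P).-1.+1 by lia.
by rewrite -catA.
Qed.

Lemma C_bwd t k c T P S : k <= t -> size P = k * b -> R (t - k) T S ->
  R t (c :: T) (P ++ c :: S).
Proof.
move=> hk hP hS; have := reach_pre (reach_cons c hS) hP.
by rewrite subnKC.
Qed.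

End Reach.

Section Blocks.
Variables (q b t : nat) (al be : 'I_q).
Implicit Types (s u v T S P z : seq 'I_q).
Local Notation R := (@burst_reach q b).

Lemma Gdown T z k j : k <= t -> k * b < size z -> R (t - k) T (drop (k * b).+1 z) ->
  j <= k -> R (t - j) T (drop (j * b).+1 z).
Proof.
move=> hk hz h hj.
have -> : drop (j * b).+1 z = take ((k - j) * b) (drop (j * b).+1 z) ++ drop (k * b).+1 z.
  rewrite -{1}(cat_take_drop ((k - j) * b) (drop (j * b).+1 z)) drop_drop.
  congr (_ ++ drop _ z); rewrite mulnBl; have := leq_mul hj (leqnn b); lia.
have -> : t - j = (k - j) + (t - k) by lia.
apply: reach_pre h _; rewrite size_take size_drop.
have := leq_mul hj (leqnn b); rewrite mulnBl; case: ltnP => h1; lia.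
Qed.

Definition blo z := [seq nth be z (j * b) | j <- iota 0 t.+1].

Lemma size_blo z : size (blo z) = t.+1.
Proof. by rewrite size_map size_iota. Qed.

Lemma nth_blo z j : j <= t -> nth be (blo z) j = nth be z (j * b).
Proof. by move=> hj; rewrite (nth_map 0) ?size_iota // nth_iota. Qed.

Lemma index_char (s : seq 'I_q) r (v : 'I_q) : r < size s -> nth be s r = v ->
  (forall j, j < r -> nth be s j != v) -> index v s = r.
Proof.
elim: s r => [|x s IH] [|r] //= hr hv hj.
  by rewrite hv eqxx.
have hx : (x == v) = false by apply/negbTE; exact: (hj 0).
rewrite hx; congr S; apply: IH => // j hjr; exact: (hj j.+1).
Qed.

Lemma before_idx (s : seq 'I_q) (v : 'I_q) j : j < index v s -> nth be s j != v.
Proof. by move=> h; have := before_find be h; rewrite /= eq_sym => ->. Qed.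

Lemma Kfirst T z : 0 < b -> R t (be :: T) z ->
  index be (blo z) <= t /\ R (t - index be (blo z)) T (drop ((index be (blo z)) * b).+1 z).
Proof.
move=> hb h; have [k [P [S [hk [hP [hS ez]]]]]] := C_fwd h.
have hnk : nth be (blo z) k = be by rewrite nth_blo // ez nth_cat hP ltnn subnn.
have hi : index be (blo z) <= k.
  by rewrite -{1}hnk; apply: index_nth; rewrite size_blo.
split; first lia.
apply: (@Gdown T z k) => //.
  by rewrite ez size_cat hP /=; lia.
by rewrite ez drop_cat hP ltnNge leqnSn /= subSn // subnn /= drop0.
Qed.

Lemma Kbwd c T z j : j <= t -> j * b < size z -> nth be z (j * b) = c ->
  R (t - j) T (drop (j * b).+1 z) -> R t (c :: T) z.
Proof.
move=> hj hz hc h.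
rewrite -(cat_take_drop (j * b) z) (drop_nth be hz) hc.
apply: (@C_bwd _ b _ _ _ _ _ _ hj _ h); rewrite size_take hz //.
Qed.

End Blocks.

Section Swap.
Variables (q b t : nat) (al be : 'I_q).
Hypothesis hab : al != be.
Hypothesis hb : 0 < b.
Implicit Types (z : seq 'I_q).
Local Notation blo := (@blo q b t be).

Definition sw c := if c == al then be else if c == be then al else c.

Lemma swK c : sw (sw c) = c.
Proof.
have hab' := negbTE hab.
have hba : (be == al) = false by rewrite eq_sym.
rewrite /sw; case: (eqVneq c al) => [->|h1].
  by rewrite eqxx hba.
case: (eqVneq c be) => [->|h2]; first by rewrite eqxx.
by rewrite (negbTE h1) (negbTE h2).
Qed.

Lemma sw_al c : (sw c == al) = (c == be).
Proof.
have hab' := negbTE hab.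
have hba : (be == al) = false by rewrite eq_sym.
rewrite /sw; case: (c =P al) => [->|h1]; first by rewrite ?eqxx ?hba ?hab'.
case: (c =P be) => [_|h2]; first by rewrite ?eqxx ?hba ?hab'.
by rewrite ?(introF eqP h1) ?(introF eqP h2).
Qed.

Lemma sw_be c : (sw c == be) = (c == al).
Proof.
have hab' := negbTE hab.
have hba : (be == al) = false by rewrite eq_sym.
rewrite /sw; case: (c =P al) => [_|h1]; first by rewrite ?eqxx ?hba ?hab'.
case: (c =P be) => [_|h2]; first by rewrite ?eqxx ?hba ?hab'.
by rewrite ?(introF eqP h1) ?(introF eqP h2).
Qed.

Definition mm z := maxn (index al (blo z)) (index be (blo z)).

Definition fs z := [seq (if (p %% b == 0) && (p %/ b <= mm z) then sw (nth be z p)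
  else nth be z p) | p <- iota 0 (size z)].

Lemma size_fs z : size (fs z) = size z.
Proof. by rewrite size_map size_iota. Qed.

Lemma nth_fs z p : p < size z -> nth be (fs z) p =
  if (p %% b == 0) && (p %/ b <= mm z) then sw (nth be z p) else nth be z p.
Proof. by move=> hp; rewrite (nth_map 0) ?size_iota // nth_iota. Qed.

Lemma blo_fs z j : j <= t -> j * b < size z ->
  nth be (blo (fs z)) j = if j <= mm z then sw (nth be (blo z) j) else nth be (blo z) j.
Proof.
move=> hj hz; rewrite !nth_blo // nth_fs // modnMl eqxx mulnK //.
Qed.

Lemma drop_fs z : drop (mm z * b).+1 (fs z) = drop (mm z * b).+1 z.
Proof.
apply: (@eq_from_nth _ be); first by rewrite !size_drop size_fs.
move=> i; rewrite size_drop size_fs => hi.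
rewrite !nth_drop nth_fs; last lia.
case: ifP => // /andP[/eqP h1 h2].
have := divn_eq ((mm z * b).+1 + i) b; rewrite h1 addn0 => e.
have := leq_mul h2 (leqnn b); lia.
Qed.

Section Props.
Variable z : seq 'I_q.
Hypothesis hz : t * b < size z.
Hypothesis hi : index al (blo z) < index be (blo z).
Hypothesis hx : index be (blo z) <= t.

Lemma jz j : j <= t -> j * b < size z.
Proof. move=> hj; have := leq_mul hj (leqnn b); lia. Qed.

Lemma mm_eq : mm z = index be (blo z).
Proof. by rewrite /mm; apply/maxn_idPr/ltnW. Qed.

Lemma idx_al_fs : index al (blo (fs z)) = index be (blo z).
Proof.
apply: (@index_char q be); first by rewrite size_blo.
  rewrite blo_fs ?jz // mm_eq leqnn.
  apply/eqP; rewrite sw_al; apply/eqP; apply: nth_index.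
  by rewrite -index_mem size_blo.
move=> j hj; rewrite blo_fs ?jz; try lia.
rewrite mm_eq (ltnW hj) sw_al; exact: before_idx.
Qed.

Lemma idx_be_fs : index be (blo (fs z)) = index al (blo z).
Proof.
apply: (@index_char q be); first by rewrite size_blo; lia.
  rewrite blo_fs ?jz; try lia.
  rewrite mm_eq (ltnW hi).
  apply/eqP; rewrite sw_be; apply/eqP; apply: nth_index.
  by rewrite -index_mem size_blo; lia.
move=> j hj; rewrite blo_fs ?jz; try lia.
rewrite mm_eq (_ : j <= _); last lia.
rewrite sw_be; exact: before_idx.
Qed.

Lemma mm_fs : mm (fs z) = mm z.
Proof. by rewrite /mm idx_al_fs idx_be_fs maxnC. Qed.

Lemma fsK : fs (fs z) = z.
Proof.
apply: (@eq_from_nth _ be); first by rewrite !size_fs.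
move=> p; rewrite !size_fs => hp.
rewrite nth_fs ?size_fs // nth_fs // mm_fs.
by case: ((p %% b == 0) && (p %/ b <= mm z)) => //=; rewrite swK.
Qed.

End Props.
End Swap.

Lemma precE (n t q b : nat) (hn : 0 < n) (U : {set (n + t * b).-tuple 'I_q})
  (a c d : 'I_q) (hac : a != c) (z : (n + t * b).-tuple 'I_q) :
  (z \in prec_set U a c) =
  (z \in U) && (index a (blo b t d z) < index c (blo b t d z)).
Proof.
have conv : forall (i : nat) (e : 'I_q), i <= t ->
    (nth q (map val z) (i * b) == val e) = (nth d (blo b t d z) i == e).
  move=> i e hi; rewrite nth_blo // (nth_map d) ?val_eqE // size_tuple.
  have := leq_mul hi (leqnn b); lia.
rewrite inE; congr (_ && _).
apply/existsP/idP.
  case=> i /andP[ha /forallP hj].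
  have hi : i <= t by rewrite -ltnS.
  rewrite conv // in ha.
  have ea : index a (blo b t d z) = i.
    apply: (@index_char q d) => //; first by rewrite size_blo.
      exact/eqP.
    move=> j hji; have := hj (inord j); rewrite inordK; last lia.
    rewrite hji implyTb conv; last lia.
    by case/andP.
  rewrite ea; case: (ltnP i (index c (blo b t d z))) => // hci.
  exfalso.
  have cin : c \in blo b t d z by rewrite -index_mem size_blo; lia.
  have hn' := nth_index d cin.
  case: (ltnP (index c (blo b t d z)) i) => hlt.
    have := hj (inord (index c (blo b t d z))); rewrite inordK; last lia.
    rewrite hlt implyTb conv; last lia.
    by rewrite conv; [rewrite hn' eqxx andbF | lia].
  have e : index c (blo b t d z) = i by lia.
  by move: ha; rewrite -e hn' eq_sym (negbTE hac).
move=> h.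
have hlt : index a (blo b t d z) < t.+1.
  have := index_size c (blo b t d z); rewrite size_blo; lia.
exists (Ordinal hlt).
have ain : a \in blo b t d z by rewrite -index_mem size_blo.
rewrite conv; last by rewrite -ltnS.
rewrite nth_index // eqxx andTb.
apply/forallP => j; apply/implyP => hj.
have hjt : j <= t by rewrite -ltnS.
rewrite !conv //; apply/andP; split.
  exact: before_idx.
apply: before_idx; exact: (leq_trans hj (ltnW h)).
Qed.

Unset Implicit Arguments.

Theorem lemma3p6 (n t q b : nat) (hn : 0 < n) (ht : 1 <= t) (hq : 2 <= q) (hb : 2 <= b)
    (x : n.-tuple 'I_q) (U : {set (n + t * b).-tuple 'I_q})
    (hU : U \subset Ins t b x) :
  let x1 := tnth x (Ordinal hn) in
  (forall alpha : 'I_q, alpha != x1 ->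
     2 * #|prec_set U alpha x1| <= Nplus q b n t)
  /\
  (Nplus q b n t + 1 <= #|U| ->
     forall alpha : 'I_q, alpha != x1 ->
       #|prec_set U alpha x1| < #|prec_set U x1 alpha|).
Proof.
move=> x1.
have hx : (x : seq 'I_q) = x1 :: behead x.
  rewrite /x1 (tnth_nth (tnth x (Ordinal hn))) /=.
  case: x {U hU x1} => [[|c s] hs] //=.
  exfalso; move/eqP: (hs) => /= hs'; lia.
clearbody x1.
set T := behead x.
have hb0 : 0 < b by lia.
have hN : t * b < n + t * b by lia.
have hjN : forall j (z : (n + t * b).-tuple 'I_q), j <= t -> j * b < size z.
  move=> j z hj; rewrite size_tuple; have := leq_mul hj (leqnn b); lia.
have inX : forall z : (n + t * b).-tuple 'I_q, z \in U -> burst_reach b t (x1 :: T) z.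
  by move=> z /(subsetP hU); rewrite inE hx.
have first_x : forall z : (n + t * b).-tuple 'I_q, z \in U ->
    index x1 (blo b t x1 z) <= t /\
    burst_reach b (t - index x1 (blo b t x1 z)) T
      (drop ((index x1 (blo b t x1 z)) * b).+1 z).
  by move=> z /inX h; apply: Kfirst.
have part1 : forall alpha : 'I_q, alpha != x1 -> 2 * #|prec_set U alpha x1| <= Nplus q b n t.
  move=> al hal.
  have hsz : size (al :: T) == n by rewrite /= /T size_behead size_tuple; apply/eqP; lia.
  pose x' : n.-tuple 'I_q := Tuple hsz.
  have hxx : x' != x.
    apply/negP => /eqP /(congr1 val); rewrite /= hx => -[]; exact/eqP.
  have inX' : forall z : (n + t * b).-tuple 'I_q, burst_reach b t (al :: T) z -> z \in Ins t b x'.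
    by move=> z h; rewrite inE.
  have inXX : forall z : (n + t * b).-tuple 'I_q, burst_reach b t (x1 :: T) z -> z \in Ins t b x.
    by move=> z h; rewrite inE hx.
  set A := prec_set U al x1.
  have memA : forall z, z \in A -> (z \in U) /\
      index al (blo b t x1 z) < index x1 (blo b t x1 z).
    by move=> z; rewrite /A (precE hn U x1) // => /andP.
  have hsf : forall z : (n + t * b).-tuple 'I_q, size (fs b t al x1 z) == n + t * b.
    by move=> z; rewrite size_fs size_tuple.
  pose ft (z : (n + t * b).-tuple 'I_q) : (n + t * b).-tuple 'I_q := Tuple (hsf z).
  set F := [set ft z | z in A].
  have cardF : #|F| = #|A|.
    apply: card_in_imset => z1 z2 h1 h2 e.
    have e' : fs b t al x1 z1 = fs b t al x1 z2 by move: (congr1 val e).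
    have [hU1 hi1] := memA _ h1; have [hU2 hi2] := memA _ h2.
    have k1 := fsK hal hb0 (z:=z1) (hjN _ z1 (leqnn t)) hi1 (first_x _ hU1).1.
    have k2 := fsK hal hb0 (z:=z2) (hjN _ z2 (leqnn t)) hi2 (first_x _ hU2).1.
    apply: val_inj; exact: (etrans (esym k1) (etrans (congr1 (fs b t al x1) e') k2)).
  have AX : A \subset Ins t b x :&: Ins t b x'.
    apply/subsetP => z hz; have [hzU hi] := memA _ hz.
    have [hxt hR] := first_x _ hzU.
    set ia := index al (blo b t x1 z) in hi *; set ix := index x1 (blo b t x1 z) in hi hxt hR *.
    have iat : ia <= t := ltnW (leq_trans hi hxt).
    apply/setIP; split; first by apply: inXX; exact: inX.
    apply: inX'.
    have ain : al \in blo b t x1 z by rewrite -index_mem size_blo ltnS.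
    apply: (@Kbwd q b t x1 al T z ia iat (hjN _ _ iat)).
    - by rewrite -(@nth_blo q b t x1 z ia iat) nth_index.
    - exact: (Gdown hxt (hjN _ _ hxt) hR (ltnW hi)).
  have FX : F \subset Ins t b x :&: Ins t b x'.
    apply/subsetP => w /imsetP[z hz ->]; have [hzU hi] := memA _ hz.
    have [hxt hR] := first_x _ hzU.
    set ia := index al (blo b t x1 z) in hi *; set ix := index x1 (blo b t x1 z) in hi hxt hR *.
    have iat : ia <= t := ltnW (leq_trans hi hxt).
    have em : mm b t al x1 z = ix := mm_eq hi.
    have hR' : burst_reach b (t - ix) T (drop (ix * b).+1 (fs b t al x1 z)).
      by rewrite -em (@drop_fs q b t al x1 hal hb0) em.
    have hjN' : forall j, j <= t -> j * b < size (fs b t al x1 z).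
      by move=> j hj; rewrite size_fs; apply: hjN.
    have ain : al \in blo b t x1 z by rewrite -index_mem size_blo ltnS.
    have xin : x1 \in blo b t x1 z by rewrite -index_mem size_blo ltnS.
    apply/setIP; split.
      apply: inXX.
      apply: (@Kbwd q b t x1 x1 T (fs b t al x1 z) ia iat (hjN' _ iat)).
      - rewrite -(@nth_blo q b t x1 _ ia iat).
        rewrite (blo_fs _ _ hb0 iat (hjN _ _ iat)).
        rewrite em (ltnW hi) nth_index //.
        by apply/eqP; rewrite sw_be.
      - exact: (Gdown hxt (hjN' _ hxt) hR' (ltnW hi)).
    apply: inX'.
    apply: (@Kbwd q b t x1 al T (fs b t al x1 z) ix hxt (hjN' _ hxt)) => //.
    - rewrite -(@nth_blo q b t x1 _ ix hxt).
      rewrite (blo_fs _ _ hb0 hxt (hjN _ _ hxt)).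
      rewrite em leqnn nth_index //.
      by apply/eqP; rewrite sw_al.
  have disj : A :&: F = set0.
    apply/setP => w; rewrite in_setI in_set0; apply/negP => /andP[hw /imsetP[z hz ew]].
    have [hzU hi] := memA _ hz.
    have [hxt _] := first_x _ hzU.
    have [_ hiw] := memA _ hw.
    have e1 : index al (blo b t x1 (fs b t al x1 z)) = index x1 (blo b t x1 z) :=
      idx_al_fs hal hb0 (hjN _ z (leqnn t)) hi hxt.
    have e2 : index x1 (blo b t x1 (fs b t al x1 z)) = index al (blo b t x1 z) :=
      idx_be_fs hal hb0 (hjN _ z (leqnn t)) hi hxt.
    move: hiw; rewrite ew.
    change (index al (blo b t x1 (fs b t al x1 z)) < index x1 (blo b t x1 (fs b t al x1 z)) -> False).
    by rewrite e1 e2 ltnNge (ltnW hi).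
  have h1 : #|A :|: F| <= #|Ins t b x :&: Ins t b x'|.
    by apply: subset_leq_card; rewrite subUset AX FX.
  have h2 : #|Ins t b x :&: Ins t b x'| <= Nplus q b n t.
    rewrite /Nplus.
    apply: leq_trans (leq_bigmax x).
    exact: (@leq_bigmax_cond _ (fun y => y != x) (fun y => #|Ins t b x :&: Ins t b y|) x' hxx).
  move: h1; rewrite cardsU disj cards0 subn0 cardF => h1.
  rewrite mul2n -addnn; exact: leq_trans h1 h2.
split => // hNU al hal.
have hp := part1 al hal.
have hal' : x1 != al by rewrite eq_sym.
have hcov : U \subset prec_set U al x1 :|: prec_set U x1 al.
  apply/subsetP => z hz; rewrite inE !(precE hn U x1) // hz !andTb.
  have [hxt _] := first_x _ hz.
  have xin : x1 \in blo b t x1 z by rewrite -index_mem size_blo ltnS.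
  case: (ltngtP (index al (blo b t x1 z)) (index x1 (blo b t x1 z))) => // e.
  have ain : al \in blo b t x1 z by rewrite -index_mem size_blo e ltnS.
  have := nth_index x1 ain; rewrite e nth_index // => ex.
  by move: hal; rewrite ex eqxx.
have := subset_leq_card hcov.
have := leq_card_setU (prec_set U al x1) (prec_set U x1 al).
case=> h _; lia.
Qed.
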